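(* Let $m_1 > m_2 \ge 2$ be integers and let $G_j$ be a first kind of ideal center graph (defined in the context) with center vertex $v_j$, consisting of a clique $K$ of size $m_1$ and a clique $K'$ of size $m_2$ with $K \cap K' = \{v_j\}$ and no edges between $K\setminus\{v_j\}$ and $K'\setminus\{v_j\}$, so that $K$ is the (unique) maximum clique of $G_j$. Let $A$ be the adjacency matrix of $G_j$, $\lambda_1$ its largest eigenvalue with eigenvector $|\lambda_1\rangle$, and for a vertex $v_l$ let $p_{l,1} = \langle l|\lambda_1\rangle\langle\lambda_1|j\rangle$. If $v_l$ is a member of the maximum clique $K$ and $v_k$ is not a member of the maximum clique, then \[ p_{l,1} > p_{k,1}, \] i.e. (for $v_l \neq v_j$) $\left|\frac{1}{m_1-2-\lambda_1}\right| > \left|\frac{1}{m_2-2-\lambda_1}\right|$.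
   Context: A graph $G_j$ is a center graph with center vertex $v_j$ if $v_j$ is adjacent to all other vertices. A first kind of ideal center graph is a center graph $G_j$ whose vertex set is the union of two cliques, both containing the center vertex $v_j$, such that no edge joins a vertex of one clique (other than $v_j$) to a vertex of the other clique; $m_1$ denotes the size of the larger (maximum) clique and $m_2$ the size of the other clique. The continuous time quantum walk on a graph with adjacency matrix $A$ (vertices $v_1,\dots,v_N$ identified with an orthonormal basis $|1\rangle,\dots,|N\rangle$) has transition amplitude $\alpha_{l,j}(t) = \langle l|e^{iAt}|j\rangle = \sum_n e^{i\lambda_n t}\langle l|\lambda_n\rangle\langle\lambda_n|j\rangle$, where $\lambda_1\ge\lambda_2\ge\dots\ge\lambda_N$ are the eigenvalues of $A$ with orthonormal eigenvectors $|\lambda_n\rangle$; $p_{l,n} = \langle l|\lambda_n\rangle\langle\lambda_n|j\rangle$ is the intensity (coefficient) of the frequency $\lambda_n$ in $\alpha_{l,j}$. *)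

(* Defs.v *)
From HB Require Import structures.
From mathcomp Require Import all_boot all_order all_algebra.
Set Implicit Arguments. Unset Strict Implicit. Unset Printing Implicit Defensive.
Import Order.TTheory GRing.Theory Num.Theory.
Local Open Scope ring_scope.

Definition adjmx (R : nzRingType) (N : nat) (e : rel 'I_N) : 'M[R]_N :=
  \matrix_(i, k) (e i k)%:R.

Definition simple_graph (N : nat) (e : rel 'I_N) : Prop :=
  symmetric e /\ irreflexive e.

Definition center_graph (N : nat) (e : rel 'I_N) (j : 'I_N) : Prop :=
  simple_graph e /\ (forall x, x != j -> e j x).

Definition is_clique (N : nat) (e : rel 'I_N) (C : {set 'I_N}) : Prop :=
  {in C &, forall x y, x != y -> e x y}.

Definition first_kind_ideal_center_graph (N : nat) (e : rel 'I_N) (j : 'I_N)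
    (K K' : {set 'I_N}) : Prop :=
  [/\ center_graph e j,
      K :|: K' = [set: 'I_N] /\ K :&: K' = [set j],
      is_clique e K, is_clique e K'
    & forall x y, x \in K :\ j -> y \in K' :\ j -> ~~ e x y].

Definition largest_eigenvalue (R : rcfType) (N : nat) (A : 'M[R]_N)
    (lam : R) : Prop :=
  eigenvalue A lam /\ (forall a, eigenvalue A a -> a <= lam).

Definition unit_eigenvector (R : rcfType) (N : nat) (A : 'M[R]_N)
    (lam : R) (u : 'rV[R]_N) : Prop :=
  u *m A = lam *: u /\ \sum_(i < N) u 0 i ^+ 2 = 1.

Definition intensity (R : rcfType) (N : nat) (u : 'rV[R]_N) (l j : 'I_N) : R :=
  u 0 l * u 0 j.

(* Main.v *)
Require Import Defs.
From HB Require Import structures.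
From mathcomp Require Import all_boot all_order all_algebra.
From mathcomp Require Import ring lra zify.
Import Order.TTheory GRing.Theory Num.Theory.
Local Open Scope ring_scope.

Section S.
Variables (R : rcfType) (N : nat) (e : rel 'I_N) (j : 'I_N) (K K' : {set 'I_N}).
Hypothesis H : first_kind_ideal_center_graph e j K K'.

Lemma memU y : (y \in K) || (y \in K').
Proof. case: H => _ [HU _] _ _ _. by rewrite -in_setU HU inE. Qed.

Lemma memI y : (y \in K) && (y \in K') = (y == j).
Proof. case: H => _ [_ HI] _ _ _. by rewrite -in_setI HI inE. Qed.

Lemma jK : j \in K.
Proof. by have := memI j; rewrite eqxx => /andP[]. Qed.
Lemma jK' : j \in K'.
Proof. by have := memI j; rewrite eqxx => /andP[]. Qed.

Lemma notK y : (y \notin K) = (y \in K' :\ j).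
Proof.
rewrite !inE -memI; have := memU y.
by case: (y \in K); case: (y \in K').
Qed.

Lemma notK' y : (y \notin K') = (y \in K :\ j).
Proof.
rewrite !inE -memI; have := memU y.
by case: (y \in K); case: (y \in K').
Qed.

Lemma nbrK x y : x \in K :\ j -> e y x = (y \in K :\ x).
Proof.
case: H => [[[esym eirr] _] _ cK cK' noe] xKj.
have xK : x \in K by move: xKj; rewrite !inE => /andP[].
case yK: (y \in K).
  rewrite !inE yK andbT. case: (eqVneq y x) => [->|yx]; first by rewrite eirr.
  by rewrite cK.
rewrite !inE yK andbF; apply/negbTE; rewrite esym; apply: noe => //.
by rewrite -notK yK.
Qed.

Lemma nbrK' x y : x \in K' :\ j -> e y x = (y \in K' :\ x).
Proof.
case: H => [[[esym eirr] _] _ cK cK' noe] xKj.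
have xK : x \in K' by move: xKj; rewrite !inE => /andP[].
case yK: (y \in K').
  rewrite !inE yK andbT. case: (eqVneq y x) => [->|yx]; first by rewrite eirr.
  by rewrite cK'.
rewrite !inE yK andbF; apply/negbTE; apply: noe => //.
by rewrite -notK' yK.
Qed.

Lemma nbrj y : e y j = (y != j).
Proof.
case: H => [[[esym eirr] cen] _ _ _ _].
case: (eqVneq y j) => [->|yj]; first by rewrite eirr.
by rewrite esym cen.
Qed.

Lemma sumP (w : 'rV[R]_N) (P : pred 'I_N) :
  \sum_y w 0 y * (P y)%:R = \sum_(y | P y) w 0 y.
Proof.
rewrite [RHS]big_mkcond; apply: eq_bigr => y _.
by case: (P y); rewrite ?mulr1 ?mulr0.
Qed.

Lemma row_adj (w : 'rV[R]_N) x :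
  (w *m adjmx R e) 0 x = \sum_y w 0 y * (e y x)%:R.
Proof. rewrite !mxE; apply: eq_bigr => y _; by rewrite mxE. Qed.

Definition SK (w : 'rV[R]_N) := \sum_(y in K) w 0 y.
Definition SK' (w : 'rV[R]_N) := \sum_(y in K') w 0 y.

Lemma eqK w x : x \in K :\ j -> (w *m adjmx R e) 0 x = SK w - w 0 x.
Proof.
move=> xKj; have xK : x \in K by move: xKj; rewrite !inE => /andP[].
rewrite row_adj (eq_bigr (fun y => w 0 y * (y \in K :\ x)%:R)); last first.
  by move=> y _; rewrite (@nbrK x y xKj).
by rewrite sumP /SK (big_setD1 _ xK) /=; ring.
Qed.

Lemma eqK' w x : x \in K' :\ j -> (w *m adjmx R e) 0 x = SK' w - w 0 x.
Proof.
move=> xKj; have xK : x \in K' by move: xKj; rewrite !inE => /andP[].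
rewrite row_adj (eq_bigr (fun y => w 0 y * (y \in K' :\ x)%:R)); last first.
  by move=> y _; rewrite (@nbrK' x y xKj).
by rewrite sumP /SK' (big_setD1 _ xK) /=; ring.
Qed.

Lemma eqj w : (w *m adjmx R e) 0 j = SK w + SK' w - 2 * w 0 j.
Proof.
rewrite row_adj (eq_bigr (fun y => w 0 y * (y != j)%:R)); last first.
  by move=> y _; rewrite nbrj.
rewrite sumP.
have -> : \sum_(y | y != j) w 0 y = \sum_y w 0 y - w 0 j.
  by rewrite [X in _ = X - _](bigD1 j) //=; ring.
rewrite (bigID (fun y => y \in K)) /=.
rewrite /SK' (big_setD1 _ jK') /=.
rewrite (@eq_bigl _ _ _ _ _ (fun y => y \notin K) (fun y => y \in K' :\ j)); last first.
  by move=> y; rewrite notK.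
rewrite /SK /=; ring.
Qed.

Lemma SK_const (w : 'rV[R]_N) (a : R) : (forall y, y \in K :\ j -> w 0 y = a) ->
  SK w = w 0 j + a * #|K :\ j|%:R.
Proof.
move=> h; rewrite /SK (big_setD1 _ jK) /= (eq_bigr (fun _ => a)) //.
by rewrite sumr_const mulr_natr.
Qed.

Lemma SK'_const (w : 'rV[R]_N) (a : R) : (forall y, y \in K' :\ j -> w 0 y = a) ->
  SK' w = w 0 j + a * #|K' :\ j|%:R.
Proof.
move=> h; rewrite /SK' (big_setD1 _ jK') /= (eq_bigr (fun _ => a)) //.
by rewrite sumr_const mulr_natr.
Qed.

Lemma lower_bound : (1 <= #|K' :\ j| < #|K :\ j|)%N ->
  exists z : R, (#|K :\ j|%:R - 1 < z) /\ eigenvalue (adjmx R e) z.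
Proof.
move=> /andP[n2g n12].
set N1 : R := #|K :\ j|%:R; set N2 : R := #|K' :\ j|%:R.
have hN2 : 1 <= N2 by rewrite /N2 ler1n.
have hN12 : N2 + 1 <= N1 by rewrite /N1 /N2 natr1 ler_nat.
pose p : {poly R} := 'X * ('X - (N1-1)%:P) * ('X - (N2-1)%:P)
   - N1%:P * ('X - (N2-1)%:P) - N2%:P * ('X - (N1-1)%:P).
have hp z : p.[z] = z*(z-(N1-1))*(z-(N2-1)) - N1*(z-(N2-1)) - N2*(z-(N1-1)).
  by rewrite /p !hornerE.
have [z /andP[z1 z2] /rootP rz] : exists2 z, N1 - 1 <= z <= N1 + N2 & root p z.
  apply: poly_ivt.
- lra.
- rewrite !hp; apply/andP; split.
    have -> : (N1 - 1) * (N1 - 1 - (N1 - 1)) * (N1 - 1 - (N2 - 1)) - N1 * (N1 - 1 - (N2 - 1)) -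
      N2 * (N1 - 1 - (N1 - 1)) = - (N1 * (N1 - N2)) by ring.
    rewrite oppr_le0; apply: mulr_ge0; lra.
  have -> : (N1 + N2) * (N1 + N2 - (N1 - 1)) * (N1 + N2 - (N2 - 1)) - N1 * (N1 + N2 - (N2 - 1)) -
    N2 * (N1 + N2 - (N1 - 1)) = (N1 + N2) * (N2 + 1) * (N1 + 1) - N1 * (N1 + 1) - N2 * (N2 + 1) by ring.
  nra.
have zgt : N1 - 1 < z.
  rewrite lt_def z1 andbT; apply/eqP => ez; move: rz; rewrite hp ez.
  have -> : (N1 - 1) * (N1 - 1 - (N1 - 1)) * (N1 - 1 - (N2 - 1)) - N1 * (N1 - 1 - (N2 - 1)) -
      N2 * (N1 - 1 - (N1 - 1)) = - (N1 * (N1 - N2)) by ring.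
  move/eqP; rewrite oppr_eq0 mulf_eq0; apply/negP; rewrite negb_or; apply/andP; split;
    apply/eqP; lra.
exists z; split => //.
set a := z - (N2 - 1); set b := z - (N1 - 1); set c := a * b.
have ha : 0 < a by rewrite /a; lra.
have hb : 0 < b by rewrite /b; lra.
pose v : 'rV[R]_N := \row_i (if i == j then c else if i \in K then a else b).
have vK y : y \in K :\ j -> v 0 y = a.
  by rewrite !inE mxE => /andP[/negbTE -> ->].
have vK' y : y \in K' :\ j -> v 0 y = b.
  move=> yK; rewrite mxE; move: (yK); rewrite -notK => /negbTE ->.
  by move: yK; rewrite !inE => /andP[/negbTE -> _].
have vj : v 0 j = c by rewrite mxE eqxx.
apply/eigenvalueP; exists v; last first.
  apply/eqP => v0; have := congr1 (fun M : 'rV[R]_N => M 0 j) v0.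
  rewrite vj mxE => c0; have : 0 < c by rewrite /c mulr_gt0.
  by rewrite c0 ltxx.
apply/rowP => i; rewrite [RHS]mxE.
case: (eqVneq i j) => [->|ij].
  rewrite eqj (@SK_const v a vK) (@SK'_const v b vK') vj.
  move: rz; rewrite hp => rz.
  rewrite /c /a /b -/N1 -/N2; lra.
case iK: (i \in K).
  have iKj : i \in K :\ j by rewrite !inE ij iK.
  rewrite eqK // (@SK_const v a vK) vj (vK i iKj) -/N1 /c /b; ring.
have iKj : i \in K' :\ j by rewrite -notK iK.
rewrite eqK' // (@SK'_const v b vK') vj (vK' i iKj) -/N2 /c /a; ring.
Qed.

End S.

Theorem theorem1 (R : rcfType) (N m1 m2 : nat) (e : rel 'I_N) (j : 'I_N)
    (K K' : {set 'I_N}) (lam1 : R) (u : 'rV[R]_N) :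
  (m2 >= 2)%N -> (m1 > m2)%N ->
  first_kind_ideal_center_graph e j K K' ->
  #|K| = m1 -> #|K'| = m2 ->
  largest_eigenvalue (adjmx R e) lam1 ->
  unit_eigenvector (adjmx R e) lam1 u ->
  forall l k : 'I_N, l \in K -> k \notin K ->
    intensity u l j > intensity u k j.
Proof.
move=> hm2 hm12 H cK cK' [_ lmax] [hu hn] l k lK kK.
have jK0 := @jK N e j K K' H; have jK0' := @jK' N e j K K' H.
have c1 := cardsD1 j K; have c2 := cardsD1 j K'.
rewrite jK0 cK add1n in c1; rewrite jK0' cK' add1n in c2.
have hnn : (0 < #|K' :\ j| < #|K :\ j|)%N.
  by move: hm2 hm12; rewrite c1 c2 !ltnS => -> ->.
have [z [zgt zev]] := @lower_bound R N e j K K' H hnn.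
have hz := lmax _ zev.
set N1 : R := #|K :\ j|%:R in zgt; set N2 : R := #|K' :\ j|%:R.
have hN2 : 1 <= N2 by rewrite /N2 ler1n; lia.
have hN12 : N2 + 1 <= N1 by rewrite /N1 /N2 natr1 ler_nat; lia.
have lamg : N1 - 1 < lam1 by lra.
have eqs x : (u *m adjmx R e) 0 x = lam1 * u 0 x by rewrite hu mxE.
set c := u 0 j.
set a := (\sum_(y in K) u 0 y) / (lam1 + 1); set b := (\sum_(y in K') u 0 y) / (lam1 + 1).
have l1 : lam1 + 1 != 0 by apply/eqP; lra.
have uK y : y \in K :\ j -> u 0 y = a.
  move=> yK; have := eqs y; rewrite (@eqK R N e j K K' H u y yK) /SK /SK' => h.
  rewrite /a; apply: (canRL (mulfK l1)); lra.
have uK' y : y \in K' :\ j -> u 0 y = b.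
  move=> yK; have := eqs y; rewrite (@eqK' R N e j K K' H u y yK) /SK /SK' => h.
  rewrite /b; apply: (canRL (mulfK l1)); lra.
have sa := @SK_const R N e j K K' H u a uK; rewrite /SK in sa.
have sb := @SK'_const R N e j K K' H u b uK'; rewrite /SK' in sb.
have ea : a * (lam1 + 1) = c + a * N1.
  by rewrite -/c -/N1 -sa /a mulfVK.
have eb : b * (lam1 + 1) = c + b * N2.
  by rewrite -/c -/N2 -sb /b mulfVK.
have d1 : 0 < lam1 + 1 - N1 by lra.
have d2 : 1 < lam1 + 1 - N2 by lra.
have ea' : a * (lam1 + 1 - N1) = c by rewrite mulrBr ea; ring.
have eb' : b * (lam1 + 1 - N2) = c by rewrite mulrBr eb; ring.
have c0 : c != 0.
  apply/eqP => c0.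
  have a0 : a = 0 by move: ea'; rewrite c0 => /eqP; rewrite mulf_eq0 => /orP[/eqP //|/eqP]; lra.
  have b0 : b = 0 by move: eb'; rewrite c0 => /eqP; rewrite mulf_eq0 => /orP[/eqP //|/eqP]; lra.
  move: hn; rewrite big1; first by move/eqP; rewrite eq_sym oner_eq0.
  move=> y _; case: (eqVneq y j) => [->|yj]; first by rewrite -/c c0 expr0n.
  case yK: (y \in K).
    by rewrite uK ?a0 ?expr0n // !inE yj yK.
  by rewrite uK' ?b0 ?expr0n // -(@notK N e j K K' H) yK.
have kK' : k \in K' :\ j by rewrite -(@notK N e j K K' H).
rewrite /intensity (uK' k kK') -/c.
have ha : a = c / (lam1 + 1 - N1) by rewrite -ea' mulfK //; apply/eqP; lra.
have hb : b = c / (lam1 + 1 - N2) by rewrite -eb' mulfK //; apply/eqP; lra.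
have cc : 0 < c * c by rewrite lt0r mulf_neq0 //= -expr2 sqr_ge0.
have hbc : b * c = c * c / (lam1 + 1 - N2) by rewrite hb mulrAC.
have hac : a * c = c * c / (lam1 + 1 - N1) by rewrite ha mulrAC.
have key : b * c < a * c.
  rewrite hbc hac ltr_pM2l //.
  rewrite ltf_pV2 ?posrE; lra.
case: (eqVneq l j) => [->|lj].
  rewrite -/c hbc ltr_pdivrMr; last by lra.
  by rewrite ltr_pMr.
by rewrite (uK l) // !inE lj lK.
Qed.
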